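(* Under the standing setup below, the paths $p_1$ and $p_2$ are induced paths of $G$ (no two vertices of $p_i$ that are non-consecutive on $p_i$ are adjacent in $G$).
   Context: A biconnected graph is series-parallel if it contains no subdivision of $K_4$. A separation pair of a biconnected graph $G$ is a pair $(s,t)$ with $G-s-t$ disconnected; a transitive edge is an edge joining the two vertices of a separation pair. A component w.r.t. $(s,t)$ is the subgraph induced by $s$, $t$ and the vertex set of one connected component of $G-s-t$; vertices other than $s,t$ are internal. A component is heavy if it has an internal vertex adjacent to neither $s$ nor $t$. Standing setup: $G$ is a biconnected series-parallel graph without transitive edges such that every separation pair has at most two heavy components, and $G$ has at least one separation pair. $(s,t)$ is a separation pair of $G$ whose number $k$ of heavy components is maximum over all separation pairs. $G_1$ and $G_2$ are two distinct components w.r.t. $(s,t)$, chosen so that $G_1$ is heavy if $k\ge 1$ and $G_2$ is heavy if $k=2$. For $i\in\{1,2\}$, $p_i$ is a longest $s$–$t$ path in $G_i$. *)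

(* Defs.v *)
(* Simple graphs as symmetric irreflexive relations on a finType. *)
From mathcomp Require Import all_boot.
Set Implicit Arguments. Unset Strict Implicit. Unset Printing Implicit Defensive.

Section Graphs.
Variables (T : finType) (e : rel T).

Definition rel_avoid (S : {set T}) : rel T :=
  fun x y => [&& e x y, x \notin S & y \notin S].

Definition connected_avoid (S : {set T}) : Prop :=
  forall x y, x \notin S -> y \notin S -> connect (rel_avoid S) x y.

Definition biconnected : Prop :=
  connected_avoid set0 /\ forall v, connected_avoid [set v].

Definition is_path (p : seq T) (a b : T) : Prop :=
  [/\ p = a :: behead p, last a (behead p) = b, path e a (behead p) & uniq p].

Definition inner (p : seq T) (a b : T) : seq T :=
  [seq x <- p | (x != a) && (x != b)].

Definition has_K4_subdivision : Prop :=
  exists (f : 'I_4 -> T) (P : 'I_4 -> 'I_4 -> seq T),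
    [/\ injective f,
        forall i j : 'I_4, i < j -> is_path (P i j) (f i) (f j),
        forall (i j : 'I_4) x, i < j -> x \in inner (P i j) (f i) (f j) ->
          forall k, x != f k
      & forall (i j i' j' : 'I_4) x, i < j -> i' < j' -> (i, j) != (i', j') ->
          x \in inner (P i j) (f i) (f j) ->
          x \notin inner (P i' j') (f i') (f j')].

Definition series_parallel : Prop := biconnected /\ ~ has_K4_subdivision.

Definition sep_pair (s t : T) : Prop :=
  s != t /\ ~ connected_avoid [set s; t].

Definition no_transitive_edges : Prop :=
  forall s t, sep_pair s t -> ~~ e s t.

Definition comp_of (s t x : T) : {set T} :=
  [set y | (y \notin [set s; t]) && connect (rel_avoid [set s; t]) x y].

(* C is the set of internal vertices of a component w.r.t. (s,t);
   the component itself is the subgraph induced by C :|: [set s; t] *)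
Definition is_comp (s t : T) (C : {set T}) : bool :=
  [exists x, (x \notin [set s; t]) && (C == comp_of s t x)].

Definition heavy (s t : T) (C : {set T}) : bool :=
  [exists x in C, ~~ e x s && ~~ e x t].

Definition nheavy (s t : T) : nat :=
  #|[set C : {set T} | is_comp s t C && heavy s t C]|.

Definition path_in (C : {set T}) (s t : T) (p : seq T) : Prop :=
  is_path p s t /\ all (fun x => x \in C :|: [set s; t]) p.

Definition longest_path_in (C : {set T}) (s t : T) (p : seq T) : Prop :=
  path_in C s t p /\ forall q, path_in C s t q -> size q <= size p.

Definition induced_path (p : seq T) : Prop :=
  forall x0 i j, i.+1 < j -> j < size p -> ~~ e (nth x0 p i) (nth x0 p j).

End Graphs.

(* Main.v *)
Require Import Defs.
From mathcomp Require Import all_boot zify.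
Set Implicit Arguments. Unset Strict Implicit. Unset Printing Implicit Defensive.

Lemma decomp (T : eqType) (p : seq T) x0 i j : i.+1 < j -> j < size p ->
  exists L M R, p = L ++ nth x0 p i :: M ++ nth x0 p j :: R /\ M != [::].
Proof.
move=> hij hj.
exists (take i p), (take (j - i.+1) (drop i.+1 p)), (drop j.+1 p); split.
  rewrite -{1}(cat_take_drop i p) (drop_nth x0) ?(ltn_trans _ hj) ?(ltn_trans (ltnSn i)) //.
  rewrite -{1}(cat_take_drop (j - i.+1) (drop i.+1 p)) drop_drop subnK ?(ltnW hij) //.
  by rewrite (drop_nth x0 hj).
rewrite -size_eq0 size_take size_drop.
apply/eqP; case: ifP => _; lia.
Qed.

Lemma uniq_count1 (T : eqType) (s : seq T) : (forall x, count_mem x s <= 1) -> uniq s.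
Proof.
move=> H; apply: count_mem_uniq => x; have := H x.
rewrite -has_pred1 has_count; case: (count_mem x s) => [|[|]] //.
Qed.

Section Main.
Variables (T : finType) (e : rel T).
Hypothesis e_sym : symmetric e.

Lemma mk_is_path a q b : last a q = b -> path e a q -> uniq (a :: q) ->
  is_path e (a :: q) a b.
Proof. by move=> *; split. Qed.

Lemma is_path_cons x q a b : is_path e (x :: q) a b ->
  [/\ x = a, last a q = b, path e a q & uniq (x :: q)].
Proof. by case=> /= [[->]] *. Qed.

Lemma path_rev x q : path e x q -> path e (last x q) (rev (belast x q)).
Proof.
move=> h; rewrite rev_path; apply: sub_path h => y z /=; by rewrite e_sym.
Qed.

Lemma is_path_rev p a b : is_path e p a b -> is_path e (rev p) b a.
Proof.
case: p => [[//]|x q] /is_path_cons [-> <- hp hu].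
rewrite lastI rev_rcons; apply: mk_is_path.
- by case: q {hp hu} => //= y q; rewrite rev_cons last_rcons.
- exact: path_rev.
- by rewrite -rev_rcons -lastI rev_uniq.
Qed.

Definition f4 (u a v b : T) (k : 'I_4) : T :=
  match val k with 0 => u | 1 => a | 2 => v | _ => b end.

Definition P4 (u a v b : T) (X1 X2 Y1 Y2 m : seq T) (i j : 'I_4) : seq T :=
  match val i, val j with
  | 0, 1 => rcons X1 a
  | 1, 2 => a :: X2
  | 0, 2 => [:: u; v]
  | 2, 3 => rcons Y1 b
  | 0, 3 => rev (b :: Y2)
  | _, _ => a :: rcons m b
  end.

Definition code4 (i j : 'I_4) : nat :=
  match val i, val j with
  | 0, 1 => 0 | 1, 2 => 1 | 0, 2 => 2 | 2, 3 => 3 | 0, 3 => 4 | _, _ => 5 end.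

Lemma code4_inj (i j i' j' : 'I_4) : i < j -> i' < j' -> code4 i j = code4 i' j' ->
  (i, j) = (i', j').
Proof.
case: i j i' j' => [[|[|[|[|?]]]] ?] [[|[|[|[|?]]]] ?] [[|[|[|[|?]]]] ?]
  [[|[|[|[|?]]]] ?] //= *; apply/eqP; rewrite xpair_eqE; apply/andP; split;
  apply/eqP/val_inj => //.
Qed.

Lemma K4 (u v a b : T) (X1 X2 Y1 Y2 m : seq T) :
  e u v -> u != v ->
  is_path e (X1 ++ a :: X2) u v -> is_path e (Y1 ++ b :: Y2) v u ->
  (forall z, z \in X1 ++ a :: X2 -> z \in Y1 ++ b :: Y2 -> z = u \/ z = v) ->
  a != u -> a != v -> b != u -> b != v ->
  path e a (rcons m b) -> uniq (a :: rcons m b) ->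
  (forall z, z \in m -> (z \notin X1 ++ a :: X2) && (z \notin Y1 ++ b :: Y2)) ->
  has_K4_subdivision e.
Proof.
move=> euv uv [hX1 hXl hXp hXu] [hY1 hYl hYp hYu] hXY au av bu bv hmp hmu hm.
case: X1 hX1 hXl hXp hXu hXY hm => [[/eqP]|x X1']; first by rewrite (negbTE au).
move=> /= [hx] hXl hXp hXu hXY hm.
subst x.
case: Y1 hY1 hYl hYp hYu hXY hm => [[/eqP]|y Y1']; first by rewrite (negbTE bv).
move=> /= [hy] hYl hYp hYu hXY hm.
subst y.
have hXl' : last a X2 = v by rewrite -hXl last_cat.
have hYl' : last b Y2 = u by rewrite -hYl last_cat.
have vX2 : v \in X2.
  have := mem_last a X2; rewrite hXl' inE eq_sym (negbTE av) //.
have uY2 : u \in Y2.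
  have := mem_last b Y2; rewrite hYl' inE eq_sym (negbTE bu) //.
have dX : forall z, z \in u :: X1' -> z \in a :: X2 -> False.
  have : uniq ((u :: X1') ++ a :: X2) by [].
  rewrite cat_uniq => /and3P[_ /hasPn H _] z h1 h2.
  by move: (H z h2); rewrite h1.
have dY : forall z, z \in v :: Y1' -> z \in b :: Y2 -> False.
  have : uniq ((v :: Y1') ++ b :: Y2) by [].
  rewrite cat_uniq => /and3P[_ /hasPn H _] z h1 h2.
  by move: (H z h2); rewrite h1.
have inX z : z \in (u :: X1') ++ a :: X2 = (z \in u :: X1') || (z \in a :: X2).
  by rewrite mem_cat.
have inY z : z \in (v :: Y1') ++ b :: Y2 = (z \in v :: Y1') || (z \in b :: Y2).
  by rewrite mem_cat.
have cr z : (z \in u :: X1') || (z \in a :: X2) ->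
    (z \in v :: Y1') || (z \in b :: Y2) -> (z == u) || (z == v).
  move=> h1 h2; have [] := hXY z.
  - by move: h1; rewrite /= !inE !mem_cat !inE -!orbA.
  - by move: h2; rewrite /= !inE !mem_cat !inE -!orbA.
  - by move=> ->; rewrite eqxx.
  - by move=> ->; rewrite eqxx orbT.
have hm' z : z \in m -> [&& z \notin u :: X1', z \notin a :: X2,
    z \notin v :: Y1' & z \notin b :: Y2].
  move/hm; rewrite /= !inE !mem_cat !inE !negb_or -!andbA.
  by case/and5P=> -> -> -> -> /andP[-> /andP[-> /andP[-> ->]]].
have uX1 : u \notin X1'.
  by move: hXu; rewrite /= mem_cat negb_or => /andP[/andP[]].
have uX2 : u \notin X2.
  by apply/negP=> h; apply: (dX u); rewrite !inE ?h ?eqxx ?orbT.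
have aX1 : a \notin X1' by apply/negP=> h; apply: (dX a); rewrite !inE ?h ?eqxx ?orbT.
have vX1 : v \notin X1' by apply/negP=> h; apply: (dX v); rewrite !inE ?h ?vX2 ?eqxx ?orbT.
have aX2 : a \notin X2.
  by move: hXu; rewrite /= mem_cat => /andP[_]; rewrite cat_uniq => /and3P[_ _] /= /andP[].
have vY1 : v \notin Y1'.
  by move: hYu; rewrite /= mem_cat negb_or => /andP[/andP[]].
have vY2 : v \notin Y2.
  by apply/negP=> h; apply: (dY v); rewrite !inE ?h ?eqxx ?orbT.
have bY1 : b \notin Y1' by apply/negP=> h; apply: (dY b); rewrite !inE ?h ?eqxx ?orbT.
have uY1 : u \notin Y1' by apply/negP=> h; apply: (dY u); rewrite !inE ?h ?uY2 ?eqxx ?orbT.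
have bY2 : b \notin Y2.
  by move: hYu; rewrite /= mem_cat => /andP[_]; rewrite cat_uniq => /and3P[_ _] /= /andP[].
have ab : a != b.
  apply/eqP=> hab; have := cr a; rewrite !inE eqxx hab eqxx !orbT /= => /(_ isT isT).
  by rewrite -hab (negbTE au) (negbTE av).
pose lab z := if z \in m then 5 else
  if [|| z == u, z == v, z == a | z == b] then 6 else
  if z \in X1' then 0 else if z \in X2 then 1 else if z \in Y1' then 3 else 4.
pose Rg (c : nat) (z : T) : bool := match c with
  | 0 => z \in X1' | 1 => (z \in X2) && (z != v) | 2 => false
  | 3 => z \in Y1' | 4 => (z \in Y2) && (z != u) | _ => z \in m end.
have nm z : (z \in u :: X1') || (z \in a :: X2) || (z \in v :: Y1') || (z \in b :: Y2) ->
    z \notin m.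
  move=> h; apply/negP=> /hm' /and4P[h1 h2 h3 h4]; move: h.
  by rewrite (negbTE h1) (negbTE h2) (negbTE h3) (negbTE h4).
have XnY z : z != u -> z != v -> (z \in v :: Y1') || (z \in b :: Y2) ->
    (z \notin u :: X1') && (z \notin a :: X2).
  move=> zu zv hy; rewrite -negb_or; apply/negP => hx.
  by have := cr z hx hy; rewrite (negbTE zu) (negbTE zv).
have labR c z : c <= 5 -> Rg c z -> lab z = c.
  rewrite /lab; case: c => [|[|[|[|[|[|//]]]]]] _ /= hz.
  - have zu : z != u by apply: contraNneq uX1 => <-.
    have zv : z != v by apply: contraNneq vX1 => <-.
    have za : z != a by apply: contraNneq aX1 => <-.
    have zb : z != b.
      apply/eqP=> zb; have := cr z; rewrite !inE hz zb eqxx !orbT -zb.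
      by rewrite (negbTE zu) (negbTE zv) => /(_ isT isT).
    by rewrite (negbTE (nm z _)) ?inE ?hz ?orbT // (negbTE zu) (negbTE zv) (negbTE za) (negbTE zb).
  - case/andP: hz => hz zv.
    have zu : z != u by apply: contraNneq uX2 => <-.
    have za : z != a by apply: contraNneq aX2 => <-.
    have zb : z != b.
      apply/eqP=> zb; have := cr z; rewrite !inE hz zb eqxx !orbT -zb.
      by rewrite (negbTE zu) (negbTE zv) => /(_ isT isT).
    have zX1 : z \notin X1' by apply/negP=> h; apply: (dX z); rewrite !inE ?h ?hz ?orbT.
    by rewrite (negbTE (nm z _)) ?inE ?hz ?orbT // (negbTE zu) (negbTE zv) (negbTE za) (negbTE zb) (negbTE zX1).
  - by [].
  - have zu : z != u by apply: contraNneq uY1 => <-.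
    have zv : z != v by apply: contraNneq vY1 => <-.
    have zb : z != b by apply: contraNneq bY1 => <-.
    have zX := XnY z zu zv (ltac:(by rewrite !inE hz !orbT)).
    move: zX; rewrite !inE !negb_or => /andP[/andP[_ zX1] /andP[za zX2]].
    by rewrite (negbTE (nm z _)) ?inE ?hz ?orbT // (negbTE zu) (negbTE zv) (negbTE za) (negbTE zb) (negbTE zX1) (negbTE zX2).
  - case/andP: hz => hz zu.
    have zv : z != v by apply: contraNneq vY2 => <-.
    have zb : z != b by apply: contraNneq bY2 => <-.
    have zY1 : z \notin Y1' by apply/negP=> h; apply: (dY z); rewrite !inE ?h ?hz ?orbT.
    have zX := XnY z zu zv (ltac:(by rewrite !inE hz !orbT)).
    move: zX; rewrite !inE !negb_or => /andP[/andP[_ zX1] /andP[za zX2]].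
    by rewrite (negbTE (nm z _)) ?inE ?hz ?orbT // (negbTE zu) (negbTE zv) (negbTE za) (negbTE zb) (negbTE zX1) (negbTE zX2) (negbTE zY1).
  - by rewrite hz.
have labf k : lab (f4 u a v b k) = 6.
  rewrite /lab /f4; case: k => [[|[|[|[|?]]]] ?] /=;
    rewrite (negbTE (nm _ _)) ?inE ?eqxx ?orbT //.
pose P := P4 u a v b (u :: X1') X2 (v :: Y1') Y2 m.
pose f := f4 u a v b.
have F2 (i j : 'I_4) x : i < j -> x \in inner (P i j) (f i) (f j) -> Rg (code4 i j) x.
  rewrite /P /f /P4 /f4 /code4 /inner.
  case: i j => [[|[|[|[|?]]]] ?] [[|[|[|[|?]]]] ?] // _;
    rewrite mem_filter /= ?mem_rcons ?mem_rev ?inE.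
  1-6: rewrite ?mem_rcons ?inE; case/andP=> /andP[h1 h2].
  1-6: rewrite ?(negbTE h1) ?(negbTE h2) /= ?orbF // => ->; by rewrite ?h1 ?h2.
have c5 (i j : 'I_4) : code4 i j <= 5.
  by rewrite /code4; case: (val i) => [|[|[|[|?]]]]; case: (val j) => [|[|[|[|?]]]].
exists f, P; split.
- move=> i j; rewrite /f /f4; case: i j => [[|[|[|[|?]]]] ?] [[|[|[|[|?]]]] ?] //= h;
    try (by apply: val_inj); exfalso.
  1-12: move/eqP: au => au; move/eqP: av => av; move/eqP: bu => bu;
    move/eqP: bv => bv; move/eqP: uv => uv; move/eqP: ab => ab.
  1-12: first [ by apply: au; rewrite h | by apply: av; rewrite h | by apply: bu; rewrite h
          | by apply: bv; rewrite h | by apply: uv; rewrite h | by apply: ab; rewrite h].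
- move: (hXp); rewrite cat_path /= => /and3P[hX1p hX1a hX2p].
  move: (hYp); rewrite cat_path /= => /and3P[hY1p hY1b hY2p].
  have uX : uniq (rcons (u :: X1') a ++ X2) by rewrite cat_rcons.
  have uY : uniq (rcons (v :: Y1') b ++ Y2) by rewrite cat_rcons.
  have uXa : uniq (a :: X2).
    by move: hXu => /andP[_]; rewrite cat_uniq => /and3P[].
  have uYb : uniq (b :: Y2).
    by move: hYu => /andP[_]; rewrite cat_uniq => /and3P[].
  rewrite cat_uniq in uX; rewrite cat_uniq in uY.
  case/and3P: uX => uX _ _; case/and3P: uY => uY _ _.
  rewrite /P /P4 /f /f4; case=> [[|[|[|[|?]]]] ?] [[|[|[|[|?]]]] ?] //= _.
  + apply: mk_is_path; rewrite ?last_rcons // rcons_path hX1p //.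
  + apply: mk_is_path; rewrite //= ?inE ?andbT ?euv ?uv //.
  + exact: (is_path_rev (mk_is_path hYl' hY2p uYb)).
  + exact: (mk_is_path (last_rcons _ _ _) hmp hmu).
  + apply: mk_is_path; rewrite ?last_rcons // rcons_path hY1p //.
- move=> i j x ij hx k; apply/eqP=> xk.
  have := labR _ _ (c5 i j) (F2 i j x ij hx); rewrite xk labf => h.
  by have := c5 i j; rewrite -h.
- move=> i j i' j' x ij ij' neq hx; apply/negP=> hx'.
  have h1 := labR _ _ (c5 i j) (F2 i j x ij hx).
  have h2 := labR _ _ (c5 i' j') (F2 i' j' x ij' hx').
  by move: neq; rewrite (code4_inj ij ij' (etrans (esym h1) h2)) eqxx.
Qed.

Lemma walk_bridge (X Y : seq T) (u v : T) :
  (forall z, z \in X -> z \in Y -> z = u \/ z = v) ->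
  forall q x, path e x q ->
  (exists a m, [/\ (a \in X) && (a != u) && (a != v), path e a m, last a m = x
      & all (fun z => (z \notin X) && (z \notin Y)) m]) ->
  all (fun z => (z != u) && (z != v)) q ->
  (last x q \in Y) && (last x q != u) && (last x q != v) ->
  exists a m b, [/\ (a \in X) && (a != u) && (a != v),
     (b \in Y) && (b != u) && (b != v), path e a (rcons m b)
   & all (fun z => (z \notin X) && (z \notin Y)) m].
Proof.
move=> hXY; elim=> [|y q IH] x /=.
  move=> _ [a [m [ha hp hl hm]]] _ hx; exfalso.
  case: (lastP m) hp hl hm => [|m' z] hp hl hm.
    move: hl ha hx => /= <- /andP[/andP[aX au] av] /andP[/andP[aY _] _].
    by case: (hXY a aX aY) => h; [move: au | move: av]; rewrite h eqxx.
  move: hm; rewrite all_rcons => /andP[/andP[_ zY] _].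
  by move: hl hx; rewrite last_rcons => <- /andP[/andP[zY' _] _]; rewrite zY' in zY.
move=> /andP[exy hq] [a [m [ha hp hl hm]]] /andP[/andP[yu yv] hqa] hlast.
case yY: (y \in Y).
  exists a, m, y; split=> //; first by rewrite yY yu yv.
  by rewrite rcons_path hp hl exy.
case yX: (y \in X).
  apply: (IH y hq _ hqa hlast); exists y, [::]; split=> //.
  by rewrite yX yu yv.
apply: (IH y hq _ hqa hlast); exists a, (rcons m y); split=> //.
- by rewrite rcons_path hp hl exy.
- by rewrite last_rcons.
- by rewrite all_rcons yX yY hm.
Qed.

Lemma path_avoid_all (S : {set T}) x q : path (rel_avoid e S) x q ->
  all (fun z => z \notin S) q.
Proof.
elim: q x => //= y q IH x /andP[/and3P[_ _ yS] hq]; rewrite yS; exact: IH hq.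
Qed.

Lemma path_avoid_e (S : {set T}) x q : path (rel_avoid e S) x q -> path e x q.
Proof. by apply: sub_path => y z /and3P[]. Qed.

Lemma no_cross (u v : T) (X Y : seq T) : e u v -> u != v ->
  is_path e X u v -> is_path e Y v u ->
  (forall z, z \in X -> z \in Y -> z = u \/ z = v) -> ~ has_K4_subdivision e ->
  forall w y, (w \in X) && (w != u) && (w != v) -> (y \in Y) && (y != u) && (y != v) ->
  ~ connect (rel_avoid e [set u; v]) w y.
Proof.
move=> euv uv hX hY hXY nK w y hw hy /connectP [q hq hyl].
have hqe := path_avoid_e hq.
have hqa : all (fun z => (z != u) && (z != v)) q.
  apply: sub_all (path_avoid_all hq) => z; by rewrite !inE negb_or.
have [a [m [b [ha hb hp hm]]]] : exists a m b, [/\ (a \in X) && (a != u) && (a != v),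
     (b \in Y) && (b != u) && (b != v), path e a (rcons m b)
   & all (fun z => (z \notin X) && (z \notin Y)) m].
  apply: (walk_bridge hXY hqe _ hqa); first by exists w, [::].
  by rewrite -hyl.
have hlb : last a (rcons m b) = b by rewrite last_rcons.
move: hlb; case: (shortenP hp) => p' hp' hu' hsub hlb.
case/andP: ha => /andP[aX au] av; case/andP: hb => /andP[bY bu] bv.
case: (lastP p') hp' hu' hsub hlb => [|m' b'] hp' hu' hsub hlb.
  move: hlb => /= hab; rewrite hab in aX.
  by case: (hXY b aX bY) => h; [move: bu | move: bv]; rewrite h eqxx.
rewrite last_rcons in hlb; subst b'.
have hm' : forall z, z \in m' -> (z \notin X) && (z \notin Y).
  move=> z zm; have : z \in rcons m b by apply: hsub; rewrite mem_rcons inE zm orbT.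
  rewrite mem_rcons inE => /orP[/eqP zb|zm2].
    by move: hu'; rewrite /= -cats1 cat_uniq /= -zb zm !andbF.
  by move/allP: hm => /(_ z zm2).
apply: nK; move: hX hXY hm'; case/splitPr: aX => X1 X2 hX hXY hm'.
move: hY hXY hm'; case/splitPr: bY => Y1 Y2 hY hXY hm'.
exact: (K4 euv uv hX hY hXY au av bu bv hp' hu' hm').
Qed.

Lemma rel_avoid_sym (S : {set T}) : symmetric (rel_avoid e S).
Proof. by move=> x y; rewrite /rel_avoid e_sym; case: (x \in S); case: (y \in S); rewrite ?andbF. Qed.

Lemma comp_eq s t x y : y \in comp_of e s t x -> comp_of e s t y = comp_of e s t x.
Proof.
rewrite inE => /andP[_ hxy]; apply/setP=> z; rewrite !inE.
have hs := sym_connect_sym (rel_avoid_sym [set s; t]).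
apply/andP/andP=> [][-> h]; split=> //.
  exact: connect_trans hxy h.
by apply: connect_trans h; rewrite hs.
Qed.

Lemma comp_self s t x : x \notin [set s; t] -> x \in comp_of e s t x.
Proof. by move=> hx; rewrite inE hx connect0. Qed.

Lemma comp_of_sym s t x : comp_of e s t x = comp_of e t s x.
Proof. by rewrite /comp_of /rel_avoid setUC. Qed.

Lemma exit_edge (r : rel T) (A : pred T) x z : connect r x z -> A x -> ~~ A z ->
  exists y1 y2, [/\ A y1, ~~ A y2 & r y1 y2].
Proof.
move=> /connectP [q hq ->]; elim: q x hq => [|y q IH] x /=; first by move=> _ ->.
move=> /andP[hxy hq] hx hl; case hy: (A y); first exact: IH hq hy hl.
by exists x, y; rewrite hy.
Qed.

Lemma comp_nbr s t x x' : biconnected e -> x \notin [set s; t] -> x' \notin [set s; t] ->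
  comp_of e s t x != comp_of e s t x' -> exists2 y, y \in comp_of e s t x & e y s.
Proof.
move=> [_ bic] hx hx' hne.
have hxt : x \notin [set t] by move: hx; rewrite !inE negb_or => /andP[].
have hx't : x' \notin [set t] by move: hx'; rewrite !inE negb_or => /andP[].
have := bic t x x' hxt hx't => hc.
have [y1 [y2 [h1 h2 h3]]] := exit_edge (A := [in comp_of e s t x]) hc (comp_self hx)
  (ltac:(apply/negP=> h; move/eqP: hne; apply; by rewrite (comp_eq h))).
case/and3P: h3 => e12 _ y2t.
case: (eqVneq y2 s) => [e2s|y2s]; first by exists y1 => //; rewrite -e2s.
exfalso; move/negP: h2; apply.
have y2st : y2 \notin [set s; t] by move: y2t; rewrite !inE (negbTE y2s).
move: (h1); rewrite inE => /andP[y1st cxy1].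
rewrite inE y2st /=; apply: connect_trans cxy1 _; apply: connect1.
by rewrite /rel_avoid e12 y1st y2st.
Qed.

Lemma build_Q s t x x' : biconnected e -> x \notin [set s; t] -> x' \notin [set s; t] ->
  comp_of e s t x != comp_of e s t x' ->
  exists qi, [/\ qi != [::], path e s (rcons qi t), uniq qi
    & {subset qi <= comp_of e s t x}].
Proof.
move=> bic hx hx' hne.
have [y1 hy1 ey1] := comp_nbr bic hx hx' hne.
have [y2 hy2 ey2] : exists2 y, y \in comp_of e s t x & e y t.
  have hts : [set t; s] = [set s; t] by apply/setP=> z; rewrite !inE orbC.
  rewrite comp_of_sym; apply: (comp_nbr (x' := x')) => //; rewrite ?hts //.
  by rewrite -[comp_of e t s x]comp_of_sym -[comp_of e t s x']comp_of_sym.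
have hs := sym_connect_sym (rel_avoid_sym [set s; t]).
move: (hy1) (hy2); rewrite !inE => /andP[y1S cx1] /andP[y2S cx2].
have : connect (rel_avoid e [set s; t]) y1 y2.
  by apply: connect_trans cx2; rewrite hs.
move/connectP=> [q hq hl]; move: hl.
case: (shortenP hq) => q' hq' hu' _ hl.
exists (y1 :: q'); split=> //.
- by rewrite /= rcons_path (path_avoid_e hq') -hl e_sym ey1 ey2.
- move=> z hz; have cz := path_connect hq' hz.
  rewrite inE; apply/andP; split; last exact: connect_trans cx1 cz.
  move: hz; rewrite inE => /orP[/eqP ->|hz]; first by rewrite !inE in y1S *.
  by move/allP: (path_avoid_all hq') => /(_ z hz).
Qed.

Lemma induced_of s t C D p : series_parallel e -> no_transitive_edges e ->
  sep_pair e s t -> is_comp e s t C -> is_comp e s t D -> C != D ->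
  path_in e C s t p -> induced_path e p.
Proof.
move=> [bic nK] Gnotr [st _] /existsP[xc /andP[hxc /eqP eC]]
  /existsP[xd /andP[hxd /eqP eD]] CD [hp hall].
have [qi [qn qp qu qD]] := build_Q bic hxd hxc
  (ltac:(by rewrite -eD -eC eq_sym)).
move=> x0 i j hij hj; apply/negP=> euv.
have [L [M [R [hpe hM]]]] := decomp x0 hij hj.
move: euv hpe; set u := nth x0 p i; set v := nth x0 p j => euv hpe.
case: hp => hp1 hpl hpp hpu.
have qnp z : z \in qi -> z \notin p.
  move=> zq; apply/negP=> zp; move/allP: hall => /(_ z zp).
  have hzd := qD z zq; move: (hzd); rewrite inE => /andP[zst _].
  rewrite inE (negbTE zst) orbF => zC.
  move/eqP: CD; apply; rewrite eC eD -(comp_eq hzd).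
  by rewrite eC in zC; rewrite (comp_eq zC).
have cnt z : [/\ count_mem z L + ((u == z) + (count_mem z M + ((v == z) + count_mem z R))) <= 1,
   count_mem z qi <= 1 &
   count_mem z qi = 0 \/ count_mem z L + ((u == z) + (count_mem z M + ((v == z) + count_mem z R))) = 0].
  have -> : count_mem z L + ((u == z) + (count_mem z M + ((v == z) + count_mem z R))) = count_mem z p.
    by rewrite hpe count_cat /= count_cat /=.
  split; first by rewrite count_uniq_mem // leq_b1.
    by rewrite count_uniq_mem // leq_b1.
  case zq: (z \in qi); [right | left].
    by apply/eqP; rewrite -leqn0 leqNgt -has_count has_pred1 qnp.
  by apply/eqP; rewrite -leqn0 leqNgt -has_count has_pred1 zq.
have sp : sorted e p by rewrite hp1; exact: hpp.
have lp : last s p = t by rewrite hp1.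
have hh : head x0 p = s by rewrite hp1.
rewrite hpe in sp lp hh.
have [sL sR] := cat_sorted2 sp.
have [pM euM pR] : [/\ path e u M, e (last u M) v & path e v R].
  by move: sR; rewrite /= cat_path /= => /andP[-> /andP[-> ->]].
have lR : last v R = t by move: lp; rewrite last_cat /= last_cat.
have pX : path e u (rcons M v) by rewrite rcons_path pM euM.
have [pq1 pq2] : path e t (rev qi) /\ e (last t (rev qi)) s.
  have := path_rev qp; rewrite last_rcons belast_rcons rev_cons rcons_path.
  by case/andP.
have pL : path e (last t (rev qi)) (rcons L u).
  case: L sp hh {sL hpe cnt lp} => [|l L'] /= sp hh.
    by rewrite hh pq2.
  rewrite hh pq2 /=; move: sp; rewrite hh cat_path /= rcons_path.
  by case/andP=> -> /andP[-> _].
have pY : path e v (R ++ rev qi ++ rcons L u).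
  by rewrite cat_path pR lR cat_path pq1 pL.
have uX : uniq (u :: rcons M v).
  apply: uniq_count1 => z; have [h1 h2 h3] := cnt z.
  move: h1 h2 h3; rewrite /= -cats1 count_cat /=; generalize (count_mem z L) (count_mem z M) (count_mem z R) (count_mem z qi) (nat_of_bool (u == z)) (nat_of_bool (v == z)); clear; lia.
have uY : uniq (v :: R ++ rev qi ++ rcons L u).
  apply: uniq_count1 => z; have [h1 h2 h3] := cnt z.
  move: h1 h2 h3; rewrite /= -cats1 !count_cat count_rev /=; generalize (count_mem z L) (count_mem z M) (count_mem z R) (count_mem z qi) (nat_of_bool (u == z)) (nat_of_bool (v == z)); clear; lia.
have hXY z : z \in u :: rcons M v -> z \in v :: R ++ rev qi ++ rcons L u ->
    z = u \/ z = v.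
  case: (eqVneq u z) => [->|uz]; first by left.
  case: (eqVneq v z) => [->|vz]; first by right.
  have [h1 h2 h3] := cnt z.
  rewrite -!has_pred1 !has_count /= -!cats1 !count_cat count_rev /=.
  move: h1 h3; rewrite (negbTE uz) (negbTE vz) /=.
  generalize (count_mem z L) (count_mem z M) (count_mem z R) (count_mem z qi); clear; lia.
have uv : u != v.
  by move: uX; rewrite /= mem_rcons inE negb_or => /andP[/andP[]].
have hX : is_path e (u :: rcons M v) u v.
  by apply: mk_is_path => //; rewrite last_rcons.
have hY : is_path e (v :: R ++ rev qi ++ rcons L u) v u.
  by apply: mk_is_path => //; rewrite !last_cat last_rcons.
set w := head x0 M; set y := head x0 qi.
have wM : w \in M by rewrite /w; case: (M) hM => //= ? ? _; rewrite mem_head.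
have yq : y \in qi by rewrite /y; case: (qi) qn => //= ? ? _; rewrite mem_head.
have hw : (w \in u :: rcons M v) && (w != u) && (w != v).
  rewrite inE mem_rcons inE wM !orbT /=.
  move: uX; rewrite /= -cats1 cat_uniq mem_cat negb_or /= => /andP[/andP[uM _]].
  rewrite orbF => /and3P[_ vM _].
  by apply/andP; split; apply/eqP=> h; [move: uM | move: vM]; rewrite -h wM.
have yp := qnp y yq.
have hy : (y \in v :: R ++ rev qi ++ rcons L u) && (y != u) && (y != v).
  rewrite !inE !mem_cat mem_rev yq !orbT /=.
  apply/andP; split; apply/eqP=> h; move: yp; rewrite hpe h !mem_cat !inE ?eqxx ?orbT // mem_cat inE eqxx !orbT //=.
have hsep : sep_pair e u v.
  split=> // H; apply: (no_cross euv uv hX hY hXY nK hw hy); apply: H.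
    by case/andP: hw => /andP[_ h1] h2; rewrite !inE negb_or h1 h2.
  by case/andP: hy => /andP[_ h1] h2; rewrite !inE negb_or h1 h2.
by have := Gnotr u v hsep; rewrite euv.
Qed.
End Main.

Theorem claim1 (T : finType) (e : rel T)
  (e_sym : symmetric e) (e_irr : irreflexive e)
  (Gsp : series_parallel e)
  (Gnotr : no_transitive_edges e)
  (Gheavy2 : forall s t, sep_pair e s t -> nheavy e s t <= 2)
  (s t : T) (st_sep : sep_pair e s t)
  (st_max : forall s' t', sep_pair e s' t' -> nheavy e s' t' <= nheavy e s t)
  (C1 C2 : {set T}) (C1comp : is_comp e s t C1) (C2comp : is_comp e s t C2)
  (C12 : C1 != C2)
  (C1heavy : 1 <= nheavy e s t -> heavy e s t C1)
  (C2heavy : nheavy e s t = 2 -> heavy e s t C2)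
  (p1 p2 : seq T)
  (p1long : longest_path_in e C1 s t p1)
  (p2long : longest_path_in e C2 s t p2) :
  induced_path e p1 /\ induced_path e p2.
Proof.
split.
  exact: (induced_of e_sym Gsp Gnotr st_sep C1comp C2comp C12 p1long.1).
by apply: (induced_of e_sym Gsp Gnotr st_sep C2comp C1comp _ p2long.1); rewrite eq_sym.
Qed.
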